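(* Let $r$ be a rational number with $0<r<1$, written $r=[m_1,\dots,m_k]$, and let $n\ge2$ be an integer. Put $m=m_1$. Define intervals: if $k$ is odd, $I_1(r;n)=[0,r_1)$ with $r_1=[m_1,\dots,m_k,2n-2]$ and $I_2(r;n)=[r_2,1]$ with $r_2=[m_1,\dots,m_{k-1},m_k-1,2]$; if $k$ is even, $I_1(r;n)=[0,r_1]$ with $r_1=[m_1,\dots,m_{k-1},m_k-1,2]$ and $I_2(r;n)=(r_2,1]$ with $r_2=[m_1,\dots,m_k,2n-2]$. Then for every rational $s\neq0$ with $s\in I_1(r;n)\cup I_2(r;n)$: (1) if $k=1$ (i.e. $r=1/m$), then $CS(s)$ does not contain $((2n-2)\langle m\rangle)$ as a subsequence; (2) if $k\ge2$, then $CS(s)$ contains neither $((2n-1)\langle S_1,S_2\rangle)$ nor $((2n-1)\langle S_2,S_1\rangle)$ as a subsequence, where $(S_1,S_2)$ is the pair associated with $r$.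
   Context: Continued fractions: $[m_1,m_2,\dots,m_k]=1/(m_1+1/(m_2+\cdots+1/m_k))$ with $k\ge1$, $m_i$ positive integers, and $m_k\ge2$ unless $k=1$; every rational in $(0,1]$ has a unique such expansion. Words $u_r$: for $r=q/p$ with $0<r\le1$, $p,q$ coprime positive integers, put $\epsilon_i=(-1)^{\lfloor iq/p\rfloor}$; if $p$ is odd, $u_r=a\hat u_r b^{(-1)^q}\hat u_r^{-1}$ with $\hat u_r=b^{\epsilon_1}a^{\epsilon_2}\cdots b^{\epsilon_{p-2}}a^{\epsilon_{p-1}}$; if $p$ is even, $u_r=a\hat u_r a^{-1}\hat u_r^{-1}$ with $\hat u_r=b^{\epsilon_1}a^{\epsilon_2}\cdots a^{\epsilon_{p-2}}b^{\epsilon_{p-1}}$ (a cyclically reduced word in the free group $F(a,b)$). $S$-sequences: for a reduced word $v$ in $\{a,b\}$, write $v\equiv v_1\cdots v_t$ (visual equality) where each $v_i$ is a maximal block whose letters all have exponent $+1$ or all have exponent $-1$, consecutive blocks having opposite signs; $S(v)=(|v_1|,\dots,|v_t|)$. For a cyclic word $(v)$ (set of cyclic permutations of a cyclically reduced $v$), the cyclic $S$-sequence $CS(v)$ is the analogous cyclic sequence of block lengths taken cyclically. $S(r):=S(u_r)$, $CS(r):=CS(u_r)$. Notation: $j\langle x\rangle$ denotes $j$ consecutive copies of $x$; $j\langle X,Y\rangle$ denotes $(X,Y,X,Y,\dots,X,Y)$ with $j$ copies of $(X,Y)$. A sequence $(a_1,\dots,a_p)$ is a subsequence of a cyclic sequence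 if some representative $(b_1,\dots,b_t)$ of the cyclic sequence has $p\le t$ and $a_i=b_i$ for $1\le i\le p$ (consecutive terms). The pair $(S_1,S_2)$ associated with $r=[m_1,\dots,m_k]\in(0,1]$, $m=m_1$, is defined recursively: if $k=1$, $S_1=\emptyset$, $S_2=(m)$. If $k\ge2$, let $\tilde r=[m_3,\dots,m_k]$ if $m_2=1$ and $\tilde r=[m_2-1,m_3,\dots,m_k]$ if $m_2\ge2$, and let $(T_1,T_2)$ be the pair associated with $\tilde r$. If $m_2=1,k=3$: $S_1=(m_3\langle m+1\rangle)$, $S_2=(m)$. If $m_2=1,k\ge4$: writing $T_1=(t_1,\dots,t_{s_1})$, $T_2=(t_{s_1+1},\dots,t_{s_2})$, $S_1=(t_1\langle m+1\rangle,m,t_2\langle m+1\rangle,\dots,m,t_{s_1}\langle m+1\rangle)$ and $S_2=(m,t_{s_1+1}\langle m+1\rangle,m,\dots,m,t_{s_2}\langle m+1\rangle,m)$. If $m_2\ge2,k=2$: $S_1=(m+1)$, $S_2=((m_2-1)\langle m\rangle)$. If $m_2\ge2,k\ge3$: with the same notation $S_1=(m+1,t_{s_1+1}\langle m\rangle,m+1,\dots,m+1,t_{s_2}\langle m\rangle,m+1)$, $S_2=(t_1\langle m\rangle,m+1,t_2\langle m\rangle,\dots,m+1,t_{s_1}\langle m\rangle)$. It is known that $S(r)=(S_1,S_2,S_1,S_2)$. *)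

(* Defs.v *)
From HB Require Import structures.
From mathcomp Require Import all_boot all_order all_algebra.
Set Implicit Arguments. Unset Strict Implicit. Unset Printing Implicit Defensive.
Import Order.TTheory GRing.Theory Num.Theory.

Fixpoint cf (ms : seq nat) : rat :=
  match ms with
  | [::] => 0%R
  | m :: rest => ((m%:R + cf rest)^-1)%R
  end.

Definition cf_valid (ms : seq nat) : bool :=
  [&& 0 < size ms, all (fun m => 0 < m) ms & (1 < size ms) ==> (2 <= last 0 ms)].

Inductive gen := Ga | Gb.
(* a letter is a generator together with its exponent sign (true = +1) *)
Definition word := seq (gen * bool).

Definition winv (w : word) : word := rev [seq (x.1, ~~ x.2) | x <- w].

(* epsilon_i = (-1)^floor(i q / p) ; true means +1 *)
Definition eps (q p i : nat) : bool := ~~ odd (i * q %/ p).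

Definition uhat (q p : nat) : word :=
  [seq ((if odd i then Gb else Ga), eps q p i) | i <- iota 1 p.-1].

Definition u_word (q p : nat) : word :=
  if odd p then (Ga, true) :: uhat q p ++ (Gb, ~~ odd q) :: winv (uhat q p)
  else (Ga, true) :: uhat q p ++ (Ga, false) :: winv (uhat q p).

Fixpoint runs_aux (b : bool) (n : nat) (s : seq bool) : seq nat :=
  match s with
  | [::] => [:: n]
  | c :: s' => if c == b then runs_aux b n.+1 s' else n :: runs_aux c 1 s'
  end.

Definition runs (s : seq bool) : seq nat :=
  match s with [::] => [::] | b :: s' => runs_aux b 1 s' end.

Definition Sseq (v : word) : seq nat := runs (map snd v).

(* a representative of the cyclic S-sequence: rotate the word so that it
   starts at a (cyclic) block boundary, then take block lengths *)
Definition CSseq (v : word) : seq nat :=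
  let s := map snd v in
  let bd i := nth false s i != nth false s ((i + size s).-1 %% size s) in
  runs (rot (find bd (iota 0 (size s))) s).

Definition cyc_subseq (a cs : seq nat) : Prop :=
  exists j, prefix a (rot j cs).

Definition u_rat (r : rat) : word := u_word `|numq r|%N `|denq r|%N.
Definition S_rat (r : rat) : seq nat := Sseq (u_rat r).
Definition CS_rat (r : rat) : seq nat := CSseq (u_rat r).

(* fuel-driven recursion; fuel (sumn ms).+1 is always sufficient since
   the sum of the entries strictly decreases at each recursive call *)
Fixpoint pairF (fuel : nat) (ms : seq nat) : seq nat * seq nat :=
  match fuel with
  | 0 => ([::], [::])
  | f.+1 =>
    match ms with
    | [::] => ([::], [::])
    | [:: m] => ([::], [:: m])
    | m :: m2 :: rest =>
      if m2 == 1 then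
        match rest with
        | [::] => ([::], [::]) (* not a valid expansion *)
        | [:: m3] => (nseq m3 m.+1, [:: m])
        | _ =>
          let T := pairF f rest in
          (nseq (head 0 T.1) m.+1 ++
             flatten [seq m :: nseq t m.+1 | t <- behead T.1],
           flatten [seq m :: nseq t m.+1 | t <- T.2] ++ [:: m])
        end
      else
        match rest with
        | [::] => ([:: m.+1], nseq m2.-1 m)
        | _ =>
          let T := pairF f (m2.-1 :: rest) in
          (flatten [seq m.+1 :: nseq t m | t <- T.2] ++ [:: m.+1],
           nseq (head 0 T.1) m ++
             flatten [seq m.+1 :: nseq t m | t <- behead T.1])
        end
    end
  end.

Definition assoc_pair (ms : seq nat) : seq nat * seq nat :=
  pairF (sumn ms).+1 ms.

Definition ra (ms : seq nat) (n : nat) : rat := cf (ms ++ [:: (2 * n - 2)%N]).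
Definition rb (ms : seq nat) : rat :=
  cf (take (size ms).-1 ms ++ [:: (last 0 ms).-1; 2%N]).

Definition in_I12 (ms : seq nat) (n : nat) (s : rat) : bool :=
  if odd (size ms) then
    ((0 <= s) && (s < ra ms n))%R || ((rb ms <= s) && (s <= 1))%R
  else
    ((0 <= s) && (s <= rb ms))%R || ((ra ms n < s) && (s <= 1))%R.

Definition rep2 (j : nat) (X Y : seq nat) : seq nat := flatten (nseq j (X ++ Y)).

(* Main.v *)
Require Import Defs.
From HB Require Import structures.
From mathcomp Require Import all_boot all_order all_algebra.
From mathcomp Require Import zify.
Import Order.TTheory GRing.Theory Num.Theory.

Section RunsF.
Variable f : nat -> nat.
Hypothesis hf : forall i, f i.+1 = f i \/ f i.+1 = (f i).+1.

Lemma monoF i j : i <= j -> f i <= f j.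
Proof.
move/subnK <-; elim: (j - i) => [|k IH]; first by rewrite add0n.
rewrite addSn; case: (hf (k+i)) => ->; lia.
Qed.

Lemma runs_f len : forall a n,
 runs_aux (~~ odd (f a)) n [seq ~~ odd (f i) | i <- iota a.+1 len] =
 [seq (if k == f a then n else 0) + count (fun i => f i == k) (iota a.+1 len)
   | k <- iota (f a) (f (a + len) - f a).+1].
Proof.
elim: len => [|len IH] a n.
  by rewrite addn0 subnn /= eqxx addn0.
rewrite [iota a.+1 _]/= [map _ (_ :: _)]/= [runs_aux _ _ (_ :: _)]/=.
case: (hf a) => Ha.
- have Hb : (~~ odd (f a.+1) == ~~ odd (f a)) = true by rewrite Ha eqxx.
  rewrite Hb.
  have -> : ~~ odd (f a) = ~~ odd (f a.+1) by rewrite Ha.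
  rewrite IH -addSnnS Ha.
  apply: eq_map => k /=.
  rewrite Ha; case: eqP => [->|/eqP Hk]; first by rewrite eqxx /= addSn addnS.
  by rewrite eq_sym (negbTE Hk).
- have Hb : (~~ odd (f a.+1) == ~~ odd (f a)) = false by rewrite Ha /=; case: (odd (f a)).
  rewrite Hb IH.
  have Hle : f a.+1 <= f (a.+1 + len) by apply: monoF; lia.
  have -> : (f (a + len.+1) - f a).+1 = (f (a.+1 + len) - f a.+1).+2.
    rewrite -addSnnS; lia.
  set X := f (a.+1 + len) - f a.+1.
  have -> : iota (f a) X.+2 = f a :: iota (f a.+1) X.+1 by rewrite Ha.
  set L := iota (f a.+1) X.+1.
  have HL : forall k, k \in L -> f a < k.
    by move=> k; rewrite mem_iota Ha => /andP [H _].
  apply/eqP; rewrite eqseq_cons; apply/andP; split.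
    rewrite eqxx.
    have -> : count (fun i => f i == f a) (a.+1 :: iota a.+2 len) = 0.
      apply/eqP; rewrite -leqn0 leqNgt -has_count; apply/hasPn => i.
      rewrite inE mem_iota => /orP [/eqP ->|/andP [H1 _]]; first by rewrite Ha; lia.
      have := @monoF a.+1 i (ltnW H1); rewrite Ha => H2.
      by apply/negP => /eqP E; lia.
    by rewrite addn0.
  apply/eqP/eq_in_map => k /HL Hk.
  have -> : (k == f a) = false by lia.
  rewrite add0n /=.
  by case: eqP => [->|/eqP Hk']; rewrite ?eqxx // eq_sym (negbTE Hk').
Qed.
End RunsF.
Lemma parity_key q p j : coprime q p -> 0 < j < p ->
  odd ((p - j) * q %/ p) = ~~ odd ((p + j) * q %/ p).
Proof.
move=> cop /andP [j0 jp].
have p0 : 0 < p by lia.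
have E1 : (p + j) * q = q * p + j * q by rewrite mulnDl mulnC.
rewrite E1 divnMDl // oddD.
have E2 : (p - j) * q + j * q = q * p by rewrite -mulnDl subnK ?(ltnW jp) // mulnC.
have nd : ~~ (p %| j * q).
  rewrite Gauss_dvdl; last by rewrite coprime_sym.
  by apply/negP => /dvdn_leq; lia.
have r0 : 0 < (j * q) %% p by rewrite lt0n.
have ind : p <= (p - j) * q %% p + (j * q) %% p.
  apply: dvdn_leq; first by lia.
  by rewrite /dvdn modnDm E2 modnMl.
have H := divnD ((p - j) * q) (j * q) p0.
rewrite E2 mulnK // ind in H.
rewrite {2}H !oddD.
by case: (odd _); case: (odd _).
Qed.

Lemma coprime_even_odd q p : coprime q p -> ~~ odd p -> odd q.
Proof.
move=> cop Hp; apply/negPn/negP => Hq.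
have : 2 %| gcdn q p by rewrite dvdn_gcd !dvdn2 Hq Hp.
by move: cop; rewrite /coprime => /eqP ->.
Qed.

Lemma signs_u q p : coprime q p -> 0 < q <= p ->
  map snd (u_word q p) = [seq ~~ odd (i * q %/ p) | i <- iota 0 (2 * p)].
Proof.
move=> cop /andP [q0 qp].
set g := fun i => ~~ odd (i * q %/ p).
have Hu : map snd (uhat q p) = [seq g i | i <- iota 1 p.-1] by rewrite /uhat -map_comp.
have Hw : forall w, map snd (winv w) = rev (map negb (map snd w)).
  by move=> w; rewrite /winv map_rev -!map_comp.
have p0 : 0 < p by lia.
have Hg0 : g 0 = true by rewrite /g mul0n div0n.
have Hgp : g p = ~~ odd q by rewrite /g mulnC mulnK.
have Hrev : rev (map negb (map g (iota 1 p.-1))) = map g (iota p.+1 p.-1).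
  apply: (eq_from_nth (x0 := false)); first by rewrite size_rev !size_map !size_iota.
  rewrite size_rev !size_map size_iota => i ip.
  rewrite nth_rev ?size_map ?size_iota //.
  rewrite (nth_map false) ?size_map ?size_iota; last by lia.
  rewrite (nth_map 0) ?size_iota; last by lia.
  rewrite (nth_map 0) ?size_iota // !nth_iota; try lia.
  rewrite /g negbK.
  have := @parity_key q p i.+1 cop; rewrite (_ : 0 < i.+1 < p); last by lia.
  rewrite (_ : 1 + (p.-1 - i.+1) = p - i.+1); last by lia.
  rewrite (_ : p.+1 + i = p + i.+1); last by lia.
  by move=> ->.
have Hiota : iota 0 (2 * p) = 0 :: iota 1 p.-1 ++ p :: iota p.+1 p.-1.
  clear -p0; case: p p0 => [|p'] // _.
  by rewrite (_ : 2 * p'.+1 = p'.+1 + p'.+1) ?iotaD //; lia.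
rewrite Hiota /u_word; case: ifP => Hp; rewrite /= map_cat /= Hu Hw Hu Hrev !map_cat /= Hg0 Hgp //.
by rewrite (@coprime_even_odd q p cop (negbT Hp)).
Qed.

Lemma hf_div q p i : 0 < q <= p -> (i.+1 * q %/ p = i * q %/ p) \/ (i.+1 * q %/ p = (i * q %/ p).+1).
Proof. move=> H. nia. Qed.

Lemma last_div q p : 0 < q <= p -> (2 * p).-1 * q %/ p = (2 * q).-1.
Proof. move=> H. nia. Qed.

Lemma CS_u q p : coprime q p -> 0 < q <= p ->
  CSseq (u_word q p) = [seq count (fun i => i * q %/ p == k) (iota 0 (2 * p)) | k <- iota 0 (2 * q)].
Proof.
move=> cop Hqp.
have p0 : 0 < p by lia.
rewrite /CSseq signs_u // size_map size_iota.
set f := fun i => i * q %/ p.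
have Hf0 : f 0 = 0 by rewrite /f mul0n div0n.
have Hfl : f (2 * p).-1 = (2 * q).-1 by apply: last_div.
have Hiota : iota 0 (2 * p) = 0 :: iota 1 (2 * p).-1.
  by rewrite (_ : 2 * p = (2 * p).-1.+1) //; lia.
have -> : find (fun i => nth false [seq ~~ odd (i0 * q %/ p) | i0 <- iota 0 (2 * p)] i !=
     nth false [seq ~~ odd (i0 * q %/ p) | i0 <- iota 0 (2 * p)] ((i + 2 * p).-1 %% (2 * p)))
   (iota 0 (2 * p)) = 0.
  set S := [seq ~~ odd (i0 * q %/ p) | i0 <- iota 0 (2 * p)].
  have HS : forall i, i < 2 * p -> nth false S i = ~~ odd (f i).
    by move=> i Hi; rewrite /S (nth_map 0) ?size_iota // nth_iota.
  rewrite Hiota /= add0n modn_small; last by lia.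
  rewrite !HS; try lia.
  rewrite Hf0 Hfl /=.
  have : odd (2 * q).-1 by rewrite (_ : (2 * q).-1 = (q.-1).*2.+1) /= ?odd_double //; lia.
  by move=> ->.
rewrite rot0 Hiota [map _ (_ :: _)]/= /runs.
have := @runs_f f (fun i => @hf_div q p i Hqp) (2 * p).-1 0 1.
rewrite /f /= => ->.
rewrite -/(f 0) -/(f (2 * p).-1) Hf0 Hfl subn0.
rewrite (_ : iota 0 (2 * q) = 0 :: iota 1 (2 * q).-1); last first.
  by rewrite (_ : 2 * q = (2 * q).-1.+1) //; lia.
rewrite [RHS]/=; congr (_ :: _).
apply/eq_in_map => k; rewrite mem_iota => /andP [Hk _].
by rewrite eq_sym; case: (k == 0) Hk.
Qed.

Lemma rot_psum (cs : seq nat) (H : nat -> nat) :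
  (forall e, e <= size cs -> sumn (take e cs) = H e) ->
  (forall t, t <= size cs -> H (t + size cs) = H t + H (size cs)) ->
  forall j, exists j0, forall e, e <= size cs -> sumn (take e (rot j cs)) + H j0 = H (j0 + e).
Proof.
move=> HS Hsh j.
set K := size cs.
have H0 : H 0 = 0 by rewrite -HS // take0.
have HK : sumn cs = H K by rewrite -HS // take_size.
case: (ltnP j K) => Hj; last first.
  exists 0 => e He; rewrite rot_oversize // HS // H0 addn0 add0n //.
exists j => e He.
rewrite /rot take_cat size_drop -/K.
case: ifP => He2.
  have := takeD j e cs; move/(congr1 sumn); rewrite sumn_cat HS; last by lia.
  by rewrite HS; [lia | lia].
rewrite sumn_cat take_takel; last by lia.
rewrite HS; last by lia.
have Hd : sumn (drop j cs) + H j = H K.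
  have := cat_take_drop j cs; move/(congr1 sumn); rewrite sumn_cat HK HS; [lia | lia].
have Hs2 : H (e - (K - j) + K) = H (e - (K - j)) + H K by apply: Hsh; lia.
rewrite (_ : e - (K - j) + K = j + e) in Hs2; last by lia.
lia.
Qed.

Lemma count_ltS (f : nat -> nat) (s : seq nat) e :
  count (fun i => f i < e + 1) s = count (fun i => f i < e) s + count (fun i => f i == e) s.
Proof.
elim: s => //= x s ->.
rewrite addn1 ltnS; case: (ltngtP (f x) e) => /= _; lia.
Qed.

Lemma sum_count (f : nat -> nat) (s : seq nat) e :
  sumn [seq count (fun i => f i == k) s | k <- iota 0 e] = count (fun i => f i < e) s.
Proof.
elim: e => [|e IH]; first by elim: s => //= x s <-.
by rewrite -addn1 iotaD map_cat sumn_cat IH /= addn0 add0n count_ltS.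
Qed.

Lemma count_ltiota t M : count (fun i => i < t) (iota 0 M) = minn t M.
Proof.
elim: M => [|M IH]; first by rewrite /= minn0.
rewrite -addn1 iotaD count_cat IH /= add0n addn0; lia.
Qed.

Definition Hc (q p e : nat) := (e * p + q.-1) %/ q.

Lemma CS_psum q p e : 0 < q <= p -> e <= 2 * q ->
  sumn (take e [seq count (fun i => i * q %/ p == k) (iota 0 (2 * p)) | k <- iota 0 (2 * q)]) = Hc q p e.
Proof.
move=> Hqp He.
rewrite -map_take take_iota (_ : minn e (2 * q) = e); last by lia.
rewrite (sum_count (fun i => i * q %/ p)).
rewrite (eq_count (a2 := fun i => i < Hc q p e)); last first.
  move=> i /=; rewrite /Hc; apply/idP/idP => H; nia.
rewrite count_ltiota /Hc; nia.
Qed.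

Lemma Hc_shift q p t : 0 < q -> Hc q p (t + 2 * q) = Hc q p t + Hc q p (2 * q).
Proof.
move=> q0; rewrite /Hc.
rewrite (_ : (t + 2 * q) * p + q.-1 = (2 * p) * q + (t * p + q.-1)); last by nia.
rewrite (_ : 2 * q * p + q.-1 = (2 * p) * q + q.-1); last by nia.
rewrite !divnMDl // (divn_small (m := q.-1)); lia.
Qed.

Lemma Hc_bounds q p e : 0 < q -> e * p <= q * Hc q p e /\ q * Hc q p e < e * p + q.
Proof. move=> q0; rewrite /Hc; split; nia. Qed.

Lemma rat_frac (s : rat) : (0 < s)%R ->
  s = ((`|numq s|)%:R / (`|denq s|)%:R)%R /\ 0 < `|numq s| /\ 0 < `|denq s|.
Proof.
move=> s0.
have n0 : (0 < numq s)%R by rewrite numq_gt0.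
have d0 := denq_gt0 s.
split; last by split; rewrite absz_gt0; [rewrite (gt_eqF n0) | rewrite (gt_eqF d0)].
rewrite -{1}[s]divq_num_den.
by rewrite -{1}(gez0_abs (ltW n0)) -{1}(gez0_abs (ltW d0)).
Qed.

Lemma window (s : rat) (P : seq nat) j d e W : (0 < s)%R -> (s <= 1)%R ->
  prefix P (rot j (CS_rat s)) -> d <= e <= size P ->
  sumn (take d P) + W = sumn (take e P) ->
  `|numq s| * W < (e - d) * `|denq s| + `|numq s| /\
  (e - d) * `|denq s| < `|numq s| * W + `|numq s|.
Proof.
move=> s0 s1 HP /andP [Hde HeP] HW.
have [Es [a0 b0]] := @rat_frac s s0.
set a := `|numq s| in Es a0 HW *; set b := `|denq s| in Es b0 *.
have ab : a <= b.
  move: s1; rewrite Es ler_pdivrMr ?ltr0n // mul1r ler_nat //.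
have cop : coprime a b by apply: coprime_num_den.
have Hcs : CS_rat s = [seq count (fun i => i * a %/ b == k) (iota 0 (2 * b)) | k <- iota 0 (2 * a)].
  by rewrite /CS_rat /u_rat -/a -/b CS_u //; lia.
move: HP; rewrite Hcs; set cs := map _ _ => HP.
have Hsz : size cs = 2 * a by rewrite size_map size_iota.
have [j0 Hj0] := @rot_psum cs (Hc a b)
   (fun x Hx => @CS_psum a b x (ltac:(lia)) (ltac:(rewrite size_map size_iota in Hx; lia)))
   (fun t Ht => ltac:(rewrite size_map size_iota; exact: (@Hc_shift a b t a0))) j.
rewrite Hsz in Hj0.
have HeK : e <= 2 * a.
  have := size_prefix HP; rewrite size_rot Hsz. by move=> H; exact: leq_trans HeP H.
move/prefixP: HP => [rest Erest].
have Hte : forall x, x <= size P -> take x (rot j cs) = take x P.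
  by move=> x Hx; rewrite Erest takel_cat.
have E1 := Hj0 e HeK; have E2 := Hj0 d (leq_trans Hde HeK).
rewrite !Hte in E1 E2; try lia.
have [B1 B2] := @Hc_bounds a b (j0 + e) a0.
have [B3 B4] := @Hc_bounds a b (j0 + d) a0.
nia.
Qed.

From mathcomp Require Import ring lra.
Fixpoint Nm (ms : seq nat) : nat * nat * nat * nat :=
  match ms with
  | [::] => (0, 1, 1, 0)
  | m :: r => let: (a, b, c, d) := Nm r in (c, d, m * c + a, m * d + b)
  end.

Definition Inv (ms : seq nat) (S : seq nat * seq nat) : Prop :=
  let: (Q, Q', P, P') := Nm ms in (0 < size S.1) && all (fun x => 0 < x) (S.1 ++ S.2) /\
  if odd (size ms) then
    [/\ size S.1 + Q' = Q, sumn S.1 + P' = P + 1, size S.2 = Q' & sumn S.2 + 1 = P']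
  else [/\ size S.1 = Q', sumn S.1 = P' + 1, size S.2 + Q' = Q & sumn S.2 + P' + 1 = P].

Definition Good2 (ms : seq nat) := [&& 2 <= size ms, all (fun m => 0 < m) ms & 2 <= last 0 ms].

Lemma size_fl (x y : nat) (T : seq nat) : size (flatten [seq x :: nseq t y | t <- T]) = size T + sumn T.
Proof. elim: T => //= t T IH; rewrite size_cat /= size_nseq IH; lia. Qed.

Lemma sumn_fl (x y : nat) (T : seq nat) : sumn (flatten [seq x :: nseq t y | t <- T]) = x * size T + y * sumn T.
Proof. elim: T => /= [|t T IH]; first by rewrite !muln0. rewrite sumn_cat /= sumn_nseq IH; lia. Qed.

Lemma all_fl (x y : nat) (T : seq nat) : 0 < x -> 0 < y ->
  all (fun z => 0 < z) (flatten [seq x :: nseq t y | t <- T]).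
Proof. move=> x0 y0; elim: T => //= t T IH; rewrite all_cat IH /= x0 all_nseq y0; lia. Qed.

Lemma pairF_inv f : forall ms, sumn ms < f -> Good2 ms -> Inv ms (pairF f ms).
Proof.
elim: f => [|f IH] ms; first by rewrite ltn0.
case: ms => [|m [|m2 rest]] //=; rewrite ?ltnn //.
move=> Hs /and3P [_ /andP [m0 /andP [m20 Hall]] Hl].
case: ifP => [/eqP E2|E2].
- subst m2.
  case: rest Hall Hl Hs => [|m3 [|x rest]] //= Hall Hl Hs.
  + rewrite /Inv /= size_nseq sumn_nseq addn0.
    rewrite all_cat all_nseq /=; move: Hall; rewrite /= andbT => m30.
    split; first (apply/andP; split; lia).
    rewrite /=; split; nia.
  + set rest2 := m3 :: x :: rest in Hall Hl Hs *.
    have Hg : Good2 rest2 by rewrite /Good2 /rest2 /= Hall /=; rewrite /rest2 /= in Hl; lia.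
    have := IH rest2 ltac:(rewrite /rest2 /=; lia) Hg.
    rewrite /Inv /=.
    case: (pairF f rest2) => [T1 T2] /=.
    case: (Nm rest) => [[[a b] c] d] /=.
    move=> [HT0 HT]; case: T1 HT0 HT => [|t0 T'] //= HT0 HT.
    rewrite size_cat sumn_cat size_nseq sumn_nseq size_fl sumn_fl size_cat sumn_cat size_fl sumn_fl /=.
    have t00 : 0 < t0 by case/andP: HT0.
    rewrite !all_cat all_nseq /= !all_fl //= ?andbT; try lia.
    case: (odd (size rest)) HT => /= [[H1 H2 H3 H4]|[H1 H2 H3 H4]]; (split; [lia | split; nia]).
- have m2g : 2 <= m2 by lia.
  case: rest Hall Hl Hs => [|x rest] //= Hall Hl Hs.
  + rewrite /Inv /= size_nseq sumn_nseq addn0.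
    rewrite /= all_nseq /=.
    split; first by rewrite m0 orbT.
    have Ek : m2 = m2.-1.+1 by lia.
    rewrite /=; set k := m2.-1 in Ek *; rewrite Ek; split; nia.
  + set rest2 := m2.-1 :: x :: rest.
    have Hg : Good2 rest2 by rewrite /Good2 /rest2 /= Hall /=; lia.
    have := IH rest2 ltac:(rewrite /rest2 /=; lia) Hg.
    rewrite /Inv /rest2 /=.
    case: (pairF f (m2.-1 :: x :: rest)) => [T1 T2] /=.
    case: (Nm rest) => [[[a b] c] d] /=.
    move=> [HT0 HT]; case: T1 HT0 HT => [|t0 T'] //= HT0 HT.
    rewrite !size_cat !sumn_cat !size_fl !sumn_fl !size_nseq !sumn_nseq /=.
    have t00 : 0 < t0 by case/andP: HT0.
    rewrite !all_cat all_nseq /= !all_fl //= ?andbT; try lia.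
    have Ek : m2 = m2.-1.+1 by lia.
    set k := m2.-1 in Ek HT *; rewrite Ek.
    case: (odd (size rest)) HT => /= [[H1 H2 H3 H4]|[H1 H2 H3 H4]]; (split; [lia | split; nia]).
Qed.

Definition Phi (ms : seq nat) (w : rat) : rat := foldr (fun m acc => (m%:R + acc)^-1)%R w ms.

Lemma cf_cat ms t : cf (ms ++ t) = Phi ms (cf t).
Proof. by elim: ms => //= m ms ->. Qed.

Lemma Nm_pos ms : all (fun m => 0 < m) ms ->
  let: (a, b, c, d) := Nm ms in 0 < c /\ (ms != [::] -> 0 < a).
Proof.
elim: ms => //= m ms IH /andP [m0 /IH].
case: (Nm ms) => [[[a b] c] d] [c0 _]; split => //; nia.
Qed.

Lemma Phi_frac ms (w : rat) : all (fun m => 0 < m) ms -> (0 <= w)%R ->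
  let: (a, b, c, d) := Nm ms in Phi ms w = ((a%:R + b%:R * w) / (c%:R + d%:R * w))%R.
Proof.
move=> + w0; elim: ms => [|m ms IH] /=; first by move=> _; field.
move=> /andP [m0 Hall].
have := @Nm_pos ms Hall; have := IH Hall.
case: (Nm ms) => [[[a b] c] d] -> [c0 _].
have cd0 : (0 < (c%:R + d%:R * w : rat))%R.
  by apply: (lt_le_trans (y := (c%:R)%R)); [rewrite ltr0n | rewrite lerDl mulr_ge0].
have D0 : (0 < (m%:R * (c%:R + d%:R * w) + (a%:R + b%:R * w) : rat))%R.
  apply: (lt_le_trans (y := (m%:R * (c%:R + d%:R * w))%R)); first by rewrite mulr_gt0 ?ltr0n.
  by rewrite lerDl addr_ge0 ?mulr_ge0.
rewrite !natrD !natrM.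
have -> : ((m%:R + (a%:R + b%:R * w) / (c%:R + d%:R * w) : rat))%R =
   ((m%:R * (c%:R + d%:R * w) + (a%:R + b%:R * w)) / (c%:R + d%:R * w))%R.
  by field; rewrite gt_eqF.
rewrite invf_div; congr (_ / _)%R; ring.
Qed.

Lemma Phi_ge0 ms (w : rat) : all (fun m => 0 < m) ms -> (0 <= w)%R -> (0 <= Phi ms w)%R.
Proof.
move=> + w0; elim: ms => //= m ms IH /andP [m0 /IH H].
by rewrite invr_ge0 addr_ge0.
Qed.

Lemma Phi_le1 ms (w : rat) : all (fun m => 0 < m) ms -> ms != [::] -> (0 <= w)%R -> (Phi ms w <= 1)%R.
Proof.
case: ms => //= m ms /andP [m0 Hall] _ w0.
have H := @Phi_ge0 ms w Hall w0.
rewrite invf_le1; last by apply: (lt_le_trans (y := (m%:R)%R)); [rewrite ltr0n | rewrite lerDl].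
by apply: (le_trans (y := (m%:R)%R)); [rewrite ler1n | rewrite lerDl].
Qed.

Lemma Nm_rcons ms y : Nm (ms ++ [:: y]) =
  let: (a, b, c, d) := Nm ms in (a * y + b, a, c * y + d, c).
Proof.
elim: ms => [|m ms] /=; first by congr (_, _, _, _); lia.
case: (Nm ms) => [[[a b] c] d] -> /=; congr (_, _, _, _); nia.
Qed.

Lemma Nm_det ms : let: (Q, Q', P, P') := Nm ms in
  if odd (size ms) then Q * P' = Q' * P + 1 else Q' * P = Q * P' + 1.
Proof.
elim: ms => //= m ms; case: (Nm ms) => [[[a b] c] d] /=.
by case: (odd (size ms)) => /= H; nia.
Qed.

Lemma chain a b X1 Y1 X2 Y2 : 0 < Y2 -> a * X1 < Y1 * b -> Y2 * b <= a * X2 -> X2 * Y1 <= X1 * Y2 -> False.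
Proof.
move=> y0 h1 h2 h3.
have h1' : a * X1 * Y2 < Y1 * b * Y2 by rewrite ltn_pmul2r.
have h2' : Y1 * (Y2 * b) <= Y1 * (a * X2) by rewrite leq_mul2l h2 orbT.
have h3' : a * (X2 * Y1) <= a * (X1 * Y2) by rewrite leq_mul2l h3 orbT.
lia.
Qed.
Lemma t1 l1 l2 s1 s2 c : 2 <= c -> 0 < s1 -> (l1 + l2) * (s2 + 1) = l2 * (s1 + s2) + 1 ->
   (2 * s1 + s2 - 1) * (c * (l1 + l2) + l1) <= (c * (s1 + s2) + s1 - 1) * (2 * l1 + l2).
Proof. move=> c2 s10 det. nia. Qed.

Lemma frac_lt a b X Y : 0 < b -> 0 < Y ->
  ((a%:R / b%:R : rat) < X%:R / Y%:R)%R = (a * Y < X * b).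
Proof.
move=> b0 Y0.
rewrite ltr_pdivlMr ?ltr0n // mulrAC ltr_pdivrMr ?ltr0n // -!natrM ltr_nat //.
Qed.

Lemma frac_le a b X Y : 0 < b -> 0 < Y ->
  ((a%:R / b%:R : rat) <= X%:R / Y%:R)%R = (a * Y <= X * b).
Proof.
move=> b0 Y0.
rewrite ler_pdivlMr ?ltr0n // mulrAC ler_pdivrMr ?ltr0n // -!natrM ler_nat //.
Qed.

Lemma frac_ge0 X Y : (0 <= (X%:R / Y%:R : rat))%R.
Proof. by rewrite divr_ge0 ?ler0n. Qed.

Lemma cf_ge0 t : (0 <= cf t)%R.
Proof. elim: t => //= m t IH; by rewrite invr_ge0 addr_ge0. Qed.

Lemma L_ra ms c : all (fun m => 0 < m) ms -> 0 < c ->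
  let: (Q, Q', P, P') := Nm ms in
  cf (ms ++ [:: c]) = ((c * Q + Q')%:R / (c * P + P')%:R)%R /\ 0 < c * P + P'.
Proof.
move=> Hall c0.
have := @Phi_frac ms (c%:R^-1)%R Hall ltac:(by rewrite invr_ge0 ler0n).
have := @Nm_pos ms Hall.
rewrite cf_cat (_ : cf [:: c] = (c%:R^-1)%R); last by rewrite /= addr0.
case: (Nm ms) => [[[Q Q'] P] P'] [P0 _] ->.
split; last by nia.
rewrite !natrD !natrM.
have cne : (c%:R : rat) != 0%R by rewrite pnatr_eq0 -lt0n.
have : (0 < (P%:R + P'%:R * c%:R^-1 : rat))%R.
  by apply: (lt_le_trans (y := (P%:R)%R)); [rewrite ltr0n | rewrite lerDl mulr_ge0 ?invr_ge0 ?ler0n].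
have : (0 < (c%:R * P%:R + P'%:R : rat))%R.
  by apply: (lt_le_trans (y := (c%:R * P%:R)%R)); [rewrite mulr_gt0 ?ltr0n | rewrite lerDl ler0n].
move=> h1 h2.
by field; rewrite ?cne ?(gt_eqF h1) ?(gt_eqF h2).
Qed.

Lemma L_rb ms0 k : all (fun m => 0 < m) ms0 ->
  let: (a0, b0, c0, d0) := Nm ms0 in
  cf (ms0 ++ [:: k; 2]) = ((a0 * (2 * k + 1) + 2 * b0)%:R / (c0 * (2 * k + 1) + 2 * d0)%:R)%R
  /\ 0 < c0 * (2 * k + 1) + 2 * d0.
Proof.
move=> Hall.
have w0 : (0 <= cf [:: k; 2])%R by apply: cf_ge0.
have := @Phi_frac ms0 _ Hall w0.
have := @Nm_pos ms0 Hall.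
rewrite cf_cat.
case: (Nm ms0) => [[[a0 b0] c0] d0] [c00 _] ->.
split; last by nia.
rewrite /= addr0 !natrD !natrM.
have k1 : (0 < (k%:R + 2%:R^-1 : rat))%R.
  by apply: (lt_le_trans (y := (2%:R^-1)%R)); [rewrite invr_gt0 ltr0n | rewrite lerDr ler0n].
have h1 : (0 < (c0%:R + d0%:R * (k%:R + 2%:R^-1)^-1 : rat))%R.
  by apply: (lt_le_trans (y := (c0%:R)%R)); [rewrite ltr0n | rewrite lerDl mulr_ge0 ?invr_ge0 ?ler0n ?ltW].
have h2 : (0 < (c0%:R * (2%:R * k%:R + 1) + 2%:R * d0%:R : rat))%R.
  apply: (lt_le_trans (y := (c0%:R * (2%:R * k%:R + 1))%R)); last by rewrite lerDl mulr_ge0 ?ler0n.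
  by rewrite mulr_gt0 ?ltr0n // ltr_pwDr ?ltr01 // mulr_ge0 ?ler0n.
field.
have p1 : (0 < (c0%:R * (2 * k%:R + 1) : rat))%R.
  by rewrite mulr_gt0 ?ltr0n // (lt_le_trans ltr01) // lerDr mulr_ge0 ?ler0n.
apply/andP; split; rewrite gt_eqF //.
  by apply: (lt_le_trans p1); rewrite lerDl addr_ge0 ?ler0n.
by rewrite (lt_le_trans ltr01) // lerDr mulr_ge0 ?ler0n.
Qed.

Lemma size_rep (Z : seq nat) i : size (flatten (nseq i Z)) = i * size Z.
Proof. by elim: i => //= i IH; rewrite size_cat IH mulSn. Qed.

Lemma sumn_rep (Z : seq nat) i : sumn (flatten (nseq i Z)) = i * sumn Z.
Proof. by elim: i => //= i IH; rewrite sumn_cat IH mulSn. Qed.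

Lemma take_addcat (A B : seq nat) k : take (size A + k) (A ++ B) = A ++ take k B.
Proof. by rewrite take_cat ltnNge leq_addr /= addKn. Qed.

Lemma take_rep2 (X Y : seq nat) N i : i < N ->
  take (i * size (X ++ Y) + size X) (flatten (nseq N (X ++ Y))) = flatten (nseq i (X ++ Y)) ++ X.
Proof.
move=> iN.
rewrite (_ : N = i + (N - i).-1.+1); last by lia.
rewrite nseqD flatten_cat -(size_rep (X ++ Y) i) take_addcat /= -catA take_size_cat //.
Qed.

Lemma take_rep1 (Z : seq nat) N : take (N * size Z) (flatten (nseq N Z)) = flatten (nseq N Z).
Proof. by rewrite -size_rep take_size. Qed.

Lemma rep2_win (s : rat) (X Y : seq nat) c j : (0 < s)%R -> (s <= 1)%R ->
  prefix (rep2 c.+1 X Y) (rot j (CS_rat s)) ->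
  (`|numq s| * (c * (sumn X + sumn Y) + sumn X) < (c * (size X + size Y) + size X) * `|denq s| + `|numq s| /\
   (c * (size X + size Y) + size X) * `|denq s| < `|numq s| * (c * (sumn X + sumn Y) + sumn X) + `|numq s|) /\
  (`|numq s| * (c * (sumn X + sumn Y) + sumn Y) < (c * (size X + size Y) + size Y) * `|denq s| + `|numq s| /\
   (c * (size X + size Y) + size Y) * `|denq s| < `|numq s| * (c * (sumn X + sumn Y) + sumn Y) + `|numq s|).
Proof.
move=> s0 s1 HP.
have Hsz : size (rep2 c.+1 X Y) = c.+1 * (size X + size Y) by rewrite /rep2 size_rep size_cat.
split.
- have := @window s (rep2 c.+1 X Y) j 0 (c * size (X ++ Y) + size X) (c * (sumn X + sumn Y) + sumn X) s0 s1 HP.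
  rewrite Hsz size_cat take0 /= add0n subn0 /rep2.
  rewrite -size_cat take_rep2 // sumn_cat sumn_rep sumn_cat size_cat.
  move=> H; apply: H => //; lia.
- have := @window s (rep2 c.+1 X Y) j (0 * size (X ++ Y) + size X) (c.+1 * size (X ++ Y)) (c * (sumn X + sumn Y) + sumn Y) s0 s1 HP.
  rewrite Hsz /rep2 take_rep2 // take_rep1 sumn_rep /= sumn_cat !size_cat.
  rewrite (_ : c.+1 * (size X + size Y) - (0 + size X) = c * (size X + size Y) + size Y); last by lia.
  move=> H; apply: H; [lia | lia].
Qed.
Lemma fin_odd a b c l1 l2 s1 s2 Y2 X2 :
  2 <= c -> 0 < s1 -> 0 < l1 -> (l1 + l2) * (s2 + 1) = l2 * (s1 + s2) + 1 ->
  2 * (l1 + l2) = Y2 + l2 -> 2 * (s1 + s2) = X2 + (s2 + 1) ->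
  a * (c * (s1 + s2) + s1) < (c * (l1 + l2) + l1) * b + a ->
  (c * (l1 + l2) + l2) * b < a * (c * (s1 + s2) + s2) + a ->
  (a * (c * (s1 + s2) + (s2 + 1)) < (c * (l1 + l2) + l2) * b) \/ (Y2 * b <= a * X2) -> False.
Proof.
move=> c2 s10 l10 det EY EX U V [H|H]; first by nia.
apply: (@chain a b (c * (s1 + s2) + s1 - 1) (c * (l1 + l2) + l1) X2 Y2); try nia.
Qed.

Lemma fin_even a b c l2 s2 Q' P' Y2 X2 :
  2 <= c -> Q' * (s2 + P' + 1) = (l2 + Q') * P' + 1 ->
  2 * (l2 + Q') = Y2 + Q' -> 2 * (s2 + P' + 1) = X2 + P' ->
  a * (c * (P' + 1 + s2) + (P' + 1)) < (c * (Q' + l2) + Q') * b + a ->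
  (c * (Q' + l2) + l2) * b < a * (c * (P' + 1 + s2) + s2) + a ->
  (a * X2 <= Y2 * b) \/ ((c * (l2 + Q') + Q') * b < a * (c * (s2 + P' + 1) + P')) -> False.
Proof.
move=> c2 det EY EX U V [H|H]; last by nia.
apply: (@chain b a (c * (Q' + l2) + l2) (c * (P' + 1 + s2) + s2 + 1) Y2 X2); try nia.
Qed.

Lemma fin_odd' a b c l1 l2 s1 s2 Y2 X2 Q P :
  2 <= c -> 0 < s1 -> 0 < l1 -> l1 + l2 = Q -> s1 + s2 = P -> Q * (s2 + 1) = l2 * P + 1 ->
  2 * Q = Y2 + l2 -> 2 * P = X2 + (s2 + 1) ->
  a * (c * (s1 + s2) + s1) < (c * (l1 + l2) + l1) * b + a ->
  (c * (l1 + l2) + l2) * b < a * (c * (s1 + s2) + s2) + a ->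
  (a * (c * P + (s2 + 1)) < (c * Q + l2) * b) \/ (Y2 * b <= a * X2) -> False.
Proof. move=> c2 s10 l10 EQ EP; subst Q P; exact: fin_odd. Qed.

Lemma fin_even' a b c l1 l2 s1 s2 Q' P' Y2 X2 Q P :
  2 <= c -> l1 = Q' -> s1 = P' + 1 -> l2 + Q' = Q -> s2 + P' + 1 = P -> Q' * P = Q * P' + 1 ->
  2 * Q = Y2 + Q' -> 2 * P = X2 + P' ->
  a * (c * (s1 + s2) + s1) < (c * (l1 + l2) + l1) * b + a ->
  (c * (l1 + l2) + l2) * b < a * (c * (s1 + s2) + s2) + a ->
  (a * X2 <= Y2 * b) \/ ((c * Q + Q') * b < a * (c * P + P')) -> False.
Proof. move=> c2 E1 E2 EQ EP; subst l1 s1 Q P; exact: fin_even. Qed.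


Lemma sum_pos (S : seq nat) : 0 < size S -> all (fun x => 0 < x) S -> 0 < sumn S.
Proof. by case: S => //= x S _ /andP [H _]; lia. Qed.

Lemma part1 a b c mk : 2 <= c -> 0 < a -> 0 < b -> 0 < mk ->
  a * (mk * c) < (c - 0) * b + a -> (c - 0) * b < a * (mk * c) + a ->
  (a * (c * (1 * mk + 0) + 1) < (c * (0 * mk + 1) + 0) * b) \/
  ((0 * (2 * mk.-1 + 1) + 2 * 1) * b <= a * (1 * (2 * mk.-1 + 1) + 2 * 0)) -> False.
Proof.
move=> c2 a0 b0 mk0 W1 W2; rewrite subn0 in W1 W2.
case => H; first by nia.
case: mk mk0 W1 W2 H => [|k] // _ W1 W2 /= H.
have H' : c * (2 * b) <= c * (a * (2 * k + 1)) by rewrite leq_mul2l; lia.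
have H2 : 2 * a <= c * a by rewrite leq_mul2r c2 orbT.
nia.
Qed.

Theorem mainTheorem4 (ms : seq nat) (n : nat) (s : rat) :
  cf_valid ms ->
  (0 < cf ms)%R -> (cf ms < 1)%R ->
  (2 <= n)%N ->
  s != 0%R ->
  in_I12 ms n s ->
  (size ms = 1%N -> ~ cyc_subseq (nseq (2 * n - 2) (head 0%N ms)) (CS_rat s)) /\
  ((2 <= size ms)%N ->
     ~ cyc_subseq (rep2 (2 * n - 1) (assoc_pair ms).1 (assoc_pair ms).2) (CS_rat s) /\
     ~ cyc_subseq (rep2 (2 * n - 1) (assoc_pair ms).2 (assoc_pair ms).1) (CS_rat s)).
Proof.
move=> Hv _ _ n2 sn0 HI.
have Good : 2 <= size ms -> Good2 ms.
  by move: Hv; rewrite /cf_valid /Good2 => /and3P [_ -> H] H2; rewrite H2 /=; move: H; rewrite H2.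
move: Hv; rewrite /cf_valid => /and3P [Hsz Hpos Hlast].
have c2 : 2 <= 2 * n - 2 by lia.
rewrite (_ : 2 * n - 1 = (2 * n - 2).+1); last by lia.
move: HI; rewrite /in_I12 /ra /rb.
set c := 2 * n - 2 in c2 *.
clearbody c.
move: Good; case/lastP: ms Hsz Hpos Hlast => [|ms0 mk] //= Hsz Hpos Hlast Good HI.
rewrite all_rcons in Hpos; move/andP: Hpos => [mk0 Hall0].
have HallF : all (fun m => 0 < m) (ms0 ++ [:: mk]) by rewrite all_cat Hall0 /= mk0.
rewrite -!cats1 in HI Hlast Hsz Good *.
rewrite size_cat /= addn1 /= take_size_cat // last_cat /= in HI.
have Hra := @L_ra (ms0 ++ [:: mk]) c HallF (ltnW c2).
have Hrb := @L_rb ms0 mk.-1 Hall0.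
have Hdet := Nm_det (ms0 ++ [:: mk]).
have HraP : (cf ((ms0 ++ [:: mk]) ++ [:: c]) <= 1)%R.
  by rewrite cf_cat Phi_le1 // ?cf_ge0 //; case: (ms0).
have HrbP : ms0 != [::] -> (cf (ms0 ++ [:: mk.-1; 2]) <= 1)%R.
  by move=> H; rewrite cf_cat Phi_le1 // ?cf_ge0.
have HraN := cf_ge0 ((ms0 ++ [:: mk]) ++ [:: c]).
have HrbN := cf_ge0 (ms0 ++ [:: mk.-1; 2]).
rewrite Nm_rcons size_cat /= addn1 in Hra Hdet.
case E0: (Nm ms0) Hra Hrb Hdet => [[[a0 b0] c0] d0] [Era Pra] [Erb Prb] Hdet.
have s0 : (0 < s)%R.
  rewrite lt_def sn0 /=; move: HI; case: ifP => _ /orP [/andP [H _]|/andP [H _]] //.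
  - exact: le_trans H.
  - exact: ltW (le_lt_trans HraN H).
have s1 : (s <= 1)%R.
  move: HI; case: ifP => Hodd /orP [/andP [_ H]|/andP [_ H]] //.
  - exact: ltW (lt_le_trans H HraP).
  - apply: (le_trans H); apply: HrbP; move: Hodd; case: (ms0) => //.
have [Es [a0p b0p]] := @rat_frac s s0.
set a := `|numq s| in Es a0p *; set b := `|denq s| in Es b0p *.
rewrite Era Erb Es in HI.
rewrite !frac_lt ?frac_le // in HI.
clear HraP HrbP HraN HrbN Era Erb.
split.
- rewrite size_cat /= addn1 => /eqP; rewrite eqSS => /eqP /size0nil Ems0.
  subst ms0; case: E0 => ? ? ? ?; subst a0 b0 c0 d0.
  move=> [j HP].
  have := @window s (nseq c mk) j 0 c (c * mk) s0 s1 HP ltac:(by rewrite size_nseq leqnn).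
  rewrite take0 /= take_nseq // sumn_nseq add0n mulnC => /(_ erefl) [W1 W2].
  move: HI => /= HI.
  rewrite -/a -/b in W1 W2.
  clearbody a b.
  apply: (@part1 a b c mk c2 a0p b0p mk0 W1 W2).
  by case/orP: HI => /andP [H H']; [left | right].
- move=> Hs2.
  have := @pairF_inv (sumn (ms0 ++ [:: mk])).+1 (ms0 ++ [:: mk]) (ltnSn _) (Good Hs2).
  rewrite /Inv Nm_rcons E0 -/(assoc_pair _).
  case: (assoc_pair _) => S1 S2 /= [/andP [HS10 HSp] HInv].
  rewrite all_cat in HSp; move/andP: HSp => [HS1p HS2p].
  have HS1s := @sum_pos S1 HS10 HS1p.
  rewrite size_cat /= addn1 in HInv.
  have Emk : mk = mk.-1.+1 by rewrite prednK.
  move: (mk.-1) Emk HI => k Emk HI; subst mk.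
  clear Good Hsz Hlast HallF E0 Pra Prb.
  move: HInv Hdet HI; case: ifP => Hodd /= HInv Hdet HI.
  { rewrite /= in Hodd; rewrite Hodd /= in HI.
    case: HInv => H1 H2 H3 H4.
    have HIn : (a * (c * (c0 * k.+1 + d0) + c0) < (c * (a0 * k.+1 + b0) + a0) * b) \/
               ((a0 * (2 * k + 1) + 2 * b0) * b <= a * (c0 * (2 * k + 1) + 2 * d0)).
      by case/orP: HI => /andP [H H']; [left | right].
    clear HI.
    subst a0 c0.
    split => - [j HP]; have [[U1 U2] [V1 V2]] := @rep2_win s _ _ c j s0 s1 HP; rewrite -/a -/b in U1 U2 V1 V2;
      clear HP; clearbody a b.
    { apply: (@fin_odd' a b c (size S1) (size S2) (sumn S1) (sumn S2)
         (size S2 * (2 * k + 1) + 2 * b0) ((sumn S2 + 1) * (2 * k + 1) + 2 * d0)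
         (size S2 * k.+1 + b0) ((sumn S2 + 1) * k.+1 + d0) c2 HS1s HS10); try by []; [lia | nia | nia]. }
    { rewrite (addnC (sumn S2)) (addnC (size S2)) in U1 U2 V1 V2.
      apply: (@fin_odd' a b c (size S1) (size S2) (sumn S1) (sumn S2)
         (size S2 * (2 * k + 1) + 2 * b0) ((sumn S2 + 1) * (2 * k + 1) + 2 * d0)
         (size S2 * k.+1 + b0) ((sumn S2 + 1) * k.+1 + d0) c2 HS1s HS10); try by []; [lia | nia | nia]. }
  }
  { rewrite /= in Hodd; rewrite Hodd /= in HI.
    case: HInv => H1 H2 H3 H4.
    have HIn : (a * (c0 * (2 * k + 1) + 2 * d0) <= (a0 * (2 * k + 1) + 2 * b0) * b) \/
               ((c * (a0 * k.+1 + b0) + a0) * b < a * (c * (c0 * k.+1 + d0) + c0)).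
      by case/orP: HI => /andP [H H']; [left | right].
    clear HI.
    subst a0.
    split => - [j HP]; have [[U1 U2] [V1 V2]] := @rep2_win s _ _ c j s0 s1 HP; rewrite -/a -/b in U1 U2 V1 V2;
      clear HP; clearbody a b.
    { apply: (@fin_even' a b c (size S1) (size S2) (sumn S1) (sumn S2) (size S1) c0
         (size S1 * (2 * k + 1) + 2 * b0) (c0 * (2 * k + 1) + 2 * d0)
         (size S1 * k.+1 + b0) (c0 * k.+1 + d0) c2); try by []; [nia | nia]. }
    { rewrite (addnC (sumn S2)) (addnC (size S2)) in U1 U2 V1 V2.
      apply: (@fin_even' a b c (size S1) (size S2) (sumn S1) (sumn S2) (size S1) c0
         (size S1 * (2 * k + 1) + 2 * b0) (c0 * (2 * k + 1) + 2 * d0)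
         (size S1 * k.+1 + b0) (c0 * k.+1 + d0) c2); try by []; [nia | nia]. }
}
Qed.
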